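(* Let $\ket{\psi_\mathcal{A}}$ be an antisymmetric vector state in $\mathbb{C}^d\otimes\mathbb{C}^d$ with Schmidt rank strictly larger than two. Then for every $0<p\leq 1/(d_\mathcal{S}+1)$, the state $\sigma = p\,|\psi_\mathcal{A}\rangle\langle\psi_\mathcal{A}| + (1-p)\,P_\mathcal{S}/d_\mathcal{S}$ is PPT entangled.
   Context: $V$ is the swap operator, $P_\mathcal{S}=(\mathbb{1}+V)/2$ and $P_\mathcal{A}=(\mathbb{1}-V)/2$ are the projectors onto the symmetric and antisymmetric subspaces of $\mathbb{C}^d\otimes\mathbb{C}^d$ (with $\mathbb{1}$ the identity operator); $d_\mathcal{S}=d(d+1)/2$. A vector $\ket{\psi_\mathcal{A}}$ is antisymmetric if $P_\mathcal{A}\ket{\psi_\mathcal{A}}=\ket{\psi_\mathcal{A}}$. PPT means the partial transpose is positive semidefinite. *)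

(* Defs.v *)
(* Complex scalars: an arbitrary numClosedFieldType C
   (e.g. algC, or complex R for R : rcfType / realType). *)
From HB Require Import structures.
From mathcomp Require Import all_boot all_order all_algebra.
From mathcomp Require Export mxtens.
Set Implicit Arguments. Unset Strict Implicit. Unset Printing Implicit Defensive.
Import Order.TTheory GRing.Theory Num.Theory.
Local Open Scope ring_scope.

Section QDefs.
Variable C : numClosedFieldType.

Definition adjmx m n (A : 'M[C]_(m, n)) : 'M[C]_(n, m) := (map_mx Num.conj A)^T.

(* positive semidefinite: <v, A v> is real and >= 0 for all v *)
Definition psd n (A : 'M[C]_n) : Prop :=
  forall v : 'cV[C]_n, 0 <= (adjmx v *m A *m v) 0 0.

Definition is_state n (A : 'M[C]_n) : Prop := psd A /\ \tr A = 1.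

(* C^d (x) C^d is indexed by 'I_(d*d) via mxtens_index (i, j) (a (x) b = a *t b) *)

Definition swap_op d : 'M[C]_(d * d) :=
  \matrix_(i, j) (((@mxtens_unindex d d i).1 == (@mxtens_unindex d d j).2)%:R *
                 ((@mxtens_unindex d d i).2 == (@mxtens_unindex d d j).1)%:R).

Definition PS d : 'M[C]_(d * d) := (2%:R : C)^-1 *: (1%:M + swap_op d).
Definition PA d : 'M[C]_(d * d) := (2%:R : C)^-1 *: (1%:M - swap_op d).

Definition dS d : C := (d * d.+1)%:R / 2%:R.

Definition proj n (psi : 'cV[C]_n) : 'M[C]_n := psi *m adjmx psi.

(* Schmidt rank: rank of the coefficient matrix psi = sum_ij c_ij |i>|j> *)
Definition schmidt_rank d (psi : 'cV[C]_(d * d)) : nat :=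
  \rank (\matrix_(i < d, j < d) psi (mxtens_index (i, j)) 0).

(* partial transpose on the second factor *)
Definition ptrans d (A : 'M[C]_(d * d)) : 'M[C]_(d * d) :=
  \matrix_(i, j) A (mxtens_index ((@mxtens_unindex d d i).1, (@mxtens_unindex d d j).2))
                   (mxtens_index ((@mxtens_unindex d d j).1, (@mxtens_unindex d d i).2)).

Definition PPT d (A : 'M[C]_(d * d)) : Prop := psd (ptrans A).

Definition separable d (rho : 'M[C]_(d * d)) : Prop :=
  exists (n : nat) (p : 'I_n -> C) (A B : 'I_n -> 'M[C]_d),
    (forall k, 0 <= p k) /\ \sum_k p k = 1 /\
    (forall k, is_state (A k) /\ is_state (B k)) /\
    rho = \sum_k p k *: (A k *t B k).

Definition entangled d (rho : 'M[C]_(d * d)) : Prop :=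
  is_state rho /\ ~ separable rho.

Definition PPT_entangled d (rho : 'M[C]_(d * d)) : Prop :=
  entangled rho /\ PPT rho.

End QDefs.

(* Main.v *)
Require Import Defs.
From mathcomp Require Import all_boot all_order all_algebra.
From mathcomp Require Import mxtens.
From mathcomp Require Import ring.
Set Implicit Arguments. Unset Strict Implicit. Unset Printing Implicit Defensive.
Import Order.TTheory GRing.Theory Num.Theory.
Local Open Scope ring_scope.

Section Helpers.
Variable C : numClosedFieldType.
Variable d : nat.
Local Notation idx i j := (@mxtens_index d d (i, j)).
Local Notation nsq z := (z * z^*).

Lemma idxK (i j : 'I_d) : @mxtens_unindex d d (idx i j) = (i, j).
Proof. exact: mxtens_indexK. Qed.

Lemma idx_eq (i j k l : 'I_d) : (idx i j == idx k l) = (i == k) && (j == l).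
Proof.
by rewrite (inj_eq (can_inj (@mxtens_indexK d d))) xpair_eqE.
Qed.

Lemma sum2 (F : 'I_(d * d) -> C) :
  \sum_k F k = \sum_(i < d) \sum_(j < d) F (idx i j).
Proof.
rewrite pair_big /= (reindex (@mxtens_index d d)) /=.
  by apply: eq_bigr => -[i j].
by exists (@mxtens_unindex d d) => k _; rewrite (mxtens_indexK, mxtens_unindexK).
Qed.

Lemma sumD (i : 'I_d) (F : 'I_d -> C) : \sum_k ((i == k)%:R * F k) = F i.
Proof.
rewrite (bigD1 i) //= eqxx mul1r big1 ?addr0 // => k /negbTE.
by rewrite eq_sym => ->; rewrite mul0r.
Qed.

Lemma sumD' (i : 'I_d) (F : 'I_d -> C) : \sum_k ((k == i)%:R * F k) = F i.
Proof. by rewrite -(sumD i); apply: eq_bigr => k _; rewrite eq_sym. Qed.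

Lemma nsq_ge0 (z : C) : 0 <= nsq z. Proof. exact: mul_conjC_ge0. Qed.

Lemma nsq_conj (z : C) : nsq (z^*) = nsq z.
Proof. by rewrite conjCK mulrC. Qed.

Lemma conj_nsq (z : C) : (nsq z)^* = nsq z.
Proof. by rewrite rmorphM /= conjCK mulrC. Qed.

Lemma formE n (u : 'cV[C]_n) (M : 'M[C]_n) (v : 'cV[C]_n) :
  (adjmx u *m M *m v) 0 0 = \sum_a \sum_b (u a 0)^* * M a b * v b 0.
Proof.
rewrite !mxE exchange_big /=; apply: eq_bigr => b _.
rewrite !mxE mulr_suml; apply: eq_bigr => a _; rewrite !mxE.
by [].
Qed.

Lemma formMv n (u : 'cV[C]_n) (M : 'M[C]_n) (v : 'cV[C]_n) :
  (adjmx u *m M *m v) 0 0 = \sum_a (u a 0)^* * (M *m v) a 0.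
Proof.
rewrite formE; apply: eq_bigr => a _; rewrite !mxE mulr_sumr.
by apply: eq_bigr => b _; rewrite mulrA.
Qed.

Lemma adj_conj n (u v : 'cV[C]_n) :
  (adjmx u *m v) 0 0 = ((adjmx v *m u) 0 0)^*.
Proof.
rewrite !mxE rmorph_sum; apply: eq_bigr => a _; rewrite !mxE /=.
by rewrite rmorphM /= conjCK mulrC.
Qed.


Lemma swapE (i j k l : 'I_d) :
  swap_op C d (idx i j) (idx k l) = (i == l)%:R * (j == k)%:R.
Proof. by rewrite mxE !idxK. Qed.

Lemma swapMv (v : 'cV[C]_(d * d)) i j :
  (swap_op C d *m v) (idx i j) 0 = v (idx j i) 0.
Proof.
rewrite mxE sum2.
transitivity (\sum_k (j == k)%:R * \sum_l ((i == l)%:R * v (idx k l) 0)).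
  apply: eq_bigr => k _; rewrite mulr_sumr; apply: eq_bigr => l _.
  by rewrite swapE; ring.
by rewrite sumD sumD.
Qed.

Lemma PAMv (v : 'cV[C]_(d * d)) i j :
  (PA C d *m v) (idx i j) 0 = 2%:R^-1 * (v (idx i j) 0 - v (idx j i) 0).
Proof.
by rewrite /PA -scalemxAl mulmxBl mul1mx mxE [X in _ * X]mxE [X in _ + X]mxE swapMv.
Qed.

Lemma PSMv (v : 'cV[C]_(d * d)) i j :
  (PS C d *m v) (idx i j) 0 = 2%:R^-1 * (v (idx i j) 0 + v (idx j i) 0).
Proof.
by rewrite /PS -scalemxAl mulmxDl mul1mx mxE [X in _ * X]mxE swapMv.
Qed.

Lemma two_neq0 : (2%:R : C) != 0.
Proof. by rewrite pnatr_eq0. Qed.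

Lemma anti_of_PA (v : 'cV[C]_(d * d)) : PA C d *m v = v ->
  forall i j, v (idx j i) 0 = - v (idx i j) 0.
Proof.
move=> H i j; have := congr1 (fun M : 'M[C]_(d * d, 1) => M (idx i j) 0) H; rewrite PAMv /= => E.
set a := v (idx i j) 0 in E *; set b := v (idx j i) 0 in E *.
have H2 : a - b = 2%:R * a.
  by have := congr1 (fun x => 2%:R * x) E; rewrite /= mulrA mulfV ?two_neq0 // mul1r.
transitivity (a - (a - b)); first by ring.
by rewrite H2; ring.
Qed.

Lemma formDZ n (u v : 'cV[C]_n) (A B : 'M[C]_n) (a b : C) :
  (adjmx u *m (a *: A + b *: B) *m v) 0 0 =
  a * (adjmx u *m A *m v) 0 0 + b * (adjmx u *m B *m v) 0 0.
Proof.
rewrite mulmxDr mulmxDl -!scalemxAr -!scalemxAl [LHS]mxE.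
by rewrite [X in X + _]mxE [X in _ + X]mxE.
Qed.

Lemma form_proj n (u v psi : 'cV[C]_n) :
  (adjmx u *m proj psi *m v) 0 0 =
  (adjmx u *m psi) 0 0 * (adjmx psi *m v) 0 0.
Proof. by rewrite /proj !mulmxA -[_ *m adjmx psi *m v]mulmxA mxE big_ord1. Qed.

Lemma form_PS (v : 'cV[C]_(d * d)) :
  (adjmx v *m PS C d *m v) 0 0 =
  \sum_i \sum_j (v (idx i j) 0)^* * (2%:R^-1 * (v (idx i j) 0 + v (idx j i) 0)).
Proof. by rewrite formMv sum2; apply: eq_bigr => i _; apply: eq_bigr => j _; rewrite PSMv. Qed.

Lemma form_PS_ge0 (v : 'cV[C]_(d * d)) : 0 <= (adjmx v *m PS C d *m v) 0 0.
Proof.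
rewrite form_PS.
set S := \sum_i \sum_j (v (idx i j) 0)^* * (v (idx i j) 0 + v (idx j i) 0).
have -> : \sum_i \sum_j (v (idx i j) 0)^* * (2%:R^-1 * (v (idx i j) 0 + v (idx j i) 0))
   = 2%:R^-1 * S.
  rewrite /S mulr_sumr; apply: eq_bigr => i _; rewrite mulr_sumr.
  by apply: eq_bigr => j _; ring.
have -> : S = 2%:R^-1 * \sum_i \sum_j nsq (v (idx i j) 0 + v (idx j i) 0).
  have E : \sum_i \sum_j nsq (v (idx i j) 0 + v (idx j i) 0) = S + S.
    have E1 : S = \sum_i \sum_j (v (idx j i) 0)^* * (v (idx j i) 0 + v (idx i j) 0).
      by rewrite /S exchange_big.
    rewrite {1}E1 /S -big_split /=; apply: eq_bigr => i _.
    rewrite -big_split /=; apply: eq_bigr => j _.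
    by rewrite rmorphD /=; ring.
  by rewrite E; field.
apply: mulr_ge0; first by rewrite invr_ge0 ler0n.
apply: mulr_ge0; first by rewrite invr_ge0 ler0n.
by apply: sumr_ge0 => i _; apply: sumr_ge0 => j _; apply: nsq_ge0.
Qed.

Lemma form_PS_anti (v : 'cV[C]_(d * d)) :
  (forall i j, v (idx j i) 0 = - v (idx i j) 0) ->
  (adjmx v *m PS C d *m v) 0 0 = 0.
Proof.
move=> H; rewrite form_PS big1 // => i _; rewrite big1 // => j _.
by rewrite (H i j) subrr mulr0 mulr0.
Qed.


Lemma tr_proj n (psi : 'cV[C]_n) : \tr (proj psi) = (adjmx psi *m psi) 0 0.
Proof.
rewrite /mxtrace mxE; apply: eq_bigr => a _; rewrite !mxE big_ord1 !mxE.
by rewrite mulrC.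
Qed.

Lemma tr_swap : \tr (swap_op C d) = d%:R.
Proof.
rewrite /mxtrace sum2.
transitivity (\sum_(i < d) (1 : C)); last by rewrite sumr_const card_ord.
apply: eq_bigr => i _.
transitivity (\sum_j ((i == j)%:R * (j == i)%:R : C)).
  by apply: eq_bigr => j _; rewrite swapE.
by rewrite sumD eqxx.
Qed.

Lemma tr_PS : \tr (PS C d) = dS C d.
Proof.
rewrite /PS mxtraceZ mxtraceD mxtrace1 tr_swap /dS mulnS natrD natrM.
by field.
Qed.

End Helpers.

Section KL.
Variable C : numClosedFieldType.
Variable d : nat.
Local Notation nsq z := (z * z^*).

Definition S3 (F : 'I_d -> 'I_d -> 'I_d -> C) :=
  \sum_i \sum_j \sum_k F i j k.

Lemma S3D F G : S3 (fun i j k => F i j k + G i j k) = S3 F + S3 G.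
Proof.
rewrite /S3 -big_split; apply: eq_bigr => i _.
rewrite -big_split; apply: eq_bigr => j _; by rewrite -big_split.
Qed.

Lemma S3cyc F : S3 (fun i j k => F j k i) = S3 F.
Proof.
rewrite /S3 exchange_big; apply: eq_bigr => j _; by rewrite exchange_big.
Qed.

Lemma S3ext F G : (forall i j k, F i j k = G i j k) -> S3 F = S3 G.
Proof.
move=> H; rewrite /S3; apply: eq_bigr => i _; apply: eq_bigr => j _.
by apply: eq_bigr => k _.
Qed.

Lemma S3_ge0 F : (forall i j k, 0 <= F i j k) -> 0 <= S3 F.
Proof.
move=> H; apply: sumr_ge0 => i _; apply: sumr_ge0 => j _; apply: sumr_ge0 => k _.
exact: H.
Qed.

Variable c : 'I_d -> 'I_d -> C.
Hypothesis anti : forall i j, c j i = - c i j.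
Variable x : 'I_d -> C.

Let a i j k := c i j * (x k)^*.
Let y l := \sum_i x i * c i l.
Let Y := \sum_l nsq (y l).
Let A := \sum_i \sum_j nsq (c i j).
Let B := \sum_k nsq (x k).

Let t1 : S3 (fun i j k => a i j k * (a i j k)^*) = A * B.
Proof.
rewrite /S3 /A /B mulr_suml; apply: eq_bigr => i _.
rewrite mulr_suml; apply: eq_bigr => j _.
rewrite mulr_sumr; apply: eq_bigr => k _.
by rewrite /a rmorphM /= conjCK; ring.
Qed.

Let c12 : S3 (fun i j k => a i j k * (a j k i)^*) = - Y.
Proof.
have E : S3 (fun i j k => a i j k * (a j k i)^*) =
   \sum_j (\sum_i x i * c i j) * (\sum_k x k * c j k)^*.
  rewrite /S3 exchange_big; apply: eq_bigr => j _.
  rewrite rmorph_sum mulr_suml; apply: eq_bigr => i _.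
  rewrite mulr_sumr; apply: eq_bigr => k _.
  by rewrite /a !rmorphM /= conjCK; ring.
rewrite E /Y -sumrN; apply: eq_bigr => j _.
have -> : \sum_k x k * c j k = - y j.
  by rewrite /y -sumrN; apply: eq_bigr => k _; rewrite anti mulrN.
by rewrite rmorphN /= mulrN.
Qed.

Let c21 : S3 (fun i j k => a j k i * (a i j k)^*) = - Y.
Proof.
have E : S3 (fun i j k => a j k i * (a i j k)^*) =
   \sum_j (\sum_k x k * c j k) * (\sum_i x i * c i j)^*.
  rewrite /S3 exchange_big; apply: eq_bigr => j _.
  rewrite rmorph_sum mulr_sumr; apply: eq_bigr => i _.
  rewrite mulr_suml; apply: eq_bigr => k _.
  by rewrite /a !rmorphM /= conjCK; ring.
rewrite E /Y -sumrN; apply: eq_bigr => j _.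
have -> : \sum_k x k * c j k = - y j.
  by rewrite /y -sumrN; apply: eq_bigr => k _; rewrite anti mulrN.
by rewrite mulNr.
Qed.

Lemma KL : 2%:R * Y <= A * B.
Proof.
set T := S3 (fun i j k => nsq (a i j k + a j k i + a k i j)).
have T0 : 0 <= T by apply: S3_ge0 => i j k; apply: nsq_ge0.
have ET : T = 3%:R * (A * B) - 6%:R * Y.
  have -> : T =
    S3 (fun i j k => a i j k * (a i j k)^*) +
    S3 (fun i j k => a j k i * (a j k i)^*) +
    S3 (fun i j k => a k i j * (a k i j)^*) +
    S3 (fun i j k => a i j k * (a j k i)^*) +
    S3 (fun i j k => a j k i * (a k i j)^*) +
    S3 (fun i j k => a k i j * (a i j k)^*) +
    S3 (fun i j k => a j k i * (a i j k)^*) +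
    S3 (fun i j k => a k i j * (a j k i)^*) +
    S3 (fun i j k => a i j k * (a k i j)^*).
    rewrite -!S3D; apply: S3ext => i j k; rewrite !rmorphD /=; ring.
  have s2 : S3 (fun i j k => a j k i * (a j k i)^*) = A * B.
    rewrite -t1; exact: (S3cyc (fun i j k => a i j k * (a i j k)^*)).
  have s3 : S3 (fun i j k => a k i j * (a k i j)^*) = A * B.
    rewrite -s2; exact: (S3cyc (fun i j k => a j k i * (a j k i)^*)).
  have c23 : S3 (fun i j k => a j k i * (a k i j)^*) = - Y.
    rewrite -c12; exact: (S3cyc (fun i j k => a i j k * (a j k i)^*)).
  have c31 : S3 (fun i j k => a k i j * (a i j k)^*) = - Y.
    rewrite -c23; exact: (S3cyc (fun i j k => a j k i * (a k i j)^*)).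
  have c32 : S3 (fun i j k => a k i j * (a j k i)^*) = - Y.
    rewrite -c21; exact: (S3cyc (fun i j k => a j k i * (a i j k)^*)).
  have c13 : S3 (fun i j k => a i j k * (a k i j)^*) = - Y.
    rewrite -c32; exact: (S3cyc (fun i j k => a k i j * (a j k i)^*)).
  rewrite t1 s2 s3 c12 c23 c31 c21 c32 c13; ring.
move: T0; rewrite ET subr_ge0 => H.
have H3 : 3%:R * (2%:R * Y) <= 3%:R * (A * B).
  by rewrite mulrA -natrM.
by rewrite ler_pM2l ?ltr0n in H3.
Qed.

End KL.

Section PPTpart.
Variable C : numClosedFieldType.
Variable d : nat.
Local Notation idx i j := (@mxtens_index d d (i, j)).
Local Notation nsq z := (z * z^*).

Lemma ptransMv (M : 'M[C]_(d * d)) (w : 'cV[C]_(d * d)) i j :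
  (ptrans M *m w) (idx i j) 0 =
  \sum_k \sum_l M (idx i l) (idx k j) * w (idx k l) 0.
Proof.
rewrite mxE sum2; apply: eq_bigr => k _; apply: eq_bigr => l _.
by rewrite mxE !idxK.
Qed.

Lemma ptransDZ (A B : 'M[C]_(d * d)) a b :
  ptrans (a *: A + b *: B) = a *: ptrans A + b *: ptrans B.
Proof. by apply/matrixP => u v; rewrite !mxE. Qed.

Lemma PSE (i j k l : 'I_d) :
  PS C d (idx i j) (idx k l) = 2%:R^-1 * ((i == k)%:R * (j == l)%:R + (i == l)%:R * (j == k)%:R).
Proof.
rewrite /PS !mxE !idxK idx_eq /=.
by case: (i == k); case: (j == l); rewrite /= ?mul1r ?mul0r.
Qed.

Lemma ptrans_PS_Mv (w : 'cV[C]_(d * d)) i j :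
  (ptrans (PS C d) *m w) (idx i j) 0 =
  2%:R^-1 * w (idx i j) 0 + (i == j)%:R * 2%:R^-1 * \sum_k w (idx k k) 0.
Proof.
rewrite ptransMv.
have -> : \sum_k \sum_l PS C d (idx i l) (idx k j) * w (idx k l) 0 =
  \sum_k (i == k)%:R * \sum_l ((l == j)%:R * (2%:R^-1 * w (idx k l) 0)) +
  (i == j)%:R * 2%:R^-1 * \sum_k \sum_l ((l == k)%:R * w (idx k l) 0).
  rewrite mulr_sumr -big_split; apply: eq_bigr => k _.
  rewrite !mulr_sumr -big_split; apply: eq_bigr => l _.
  rewrite PSE /=; ring.
under eq_bigr do rewrite sumD'.
rewrite sumD; congr (_ + _); congr (_ * _).
by apply: eq_bigr => k _; rewrite sumD'.
Qed.

Definition Nw (w : 'cV[C]_(d * d)) := \sum_i \sum_j nsq (w (idx i j) 0).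

Lemma form_ptrans_PS (w : 'cV[C]_(d * d)) :
  (adjmx w *m ptrans (PS C d) *m w) 0 0 =
  2%:R^-1 * Nw w + 2%:R^-1 * nsq (\sum_k w (idx k k) 0).
Proof.
rewrite formMv sum2.
under eq_bigr do under eq_bigr do rewrite ptrans_PS_Mv.
set t := \sum_k w (idx k k) 0.
have Et : \sum_i \sum_j (i == j)%:R * (w (idx i j) 0)^* = t^*.
  by under eq_bigr do rewrite sumD; rewrite rmorph_sum.
clearbody t.
have -> : \sum_i \sum_j (w (idx i j) 0)^* * (2%:R^-1 * w (idx i j) 0 +
      (i == j)%:R * 2%:R^-1 * t) =
  2%:R^-1 * Nw w + 2%:R^-1 * t * \sum_i \sum_j (i == j)%:R * (w (idx i j) 0)^*.
  rewrite /Nw !mulr_sumr -big_split; apply: eq_bigr => i _.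
  rewrite !mulr_sumr -big_split; apply: eq_bigr => j _ /=; ring.
by rewrite Et; ring.
Qed.

Lemma form_ptrans_proj (w psi : 'cV[C]_(d * d)) :
  (adjmx w *m ptrans (proj psi) *m w) 0 0 =
  \sum_j \sum_l (\sum_i (w (idx i j) 0)^* * psi (idx i l) 0) *
                ((\sum_i (w (idx i l) 0)^* * psi (idx i j) 0))^*.
Proof.
rewrite formMv sum2.
transitivity (\sum_i \sum_j \sum_k \sum_l
   (w (idx i j) 0)^* * psi (idx i l) 0 * ((w (idx k l) 0)^* * psi (idx k j) 0)^*).
  apply: eq_bigr => i _; apply: eq_bigr => j _; rewrite ptransMv mulr_sumr.
  apply: eq_bigr => k _; rewrite mulr_sumr; apply: eq_bigr => l _.
  rewrite !mxE big_ord1 !mxE rmorphM /= conjCK; ring.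
rewrite exchange_big; apply: eq_bigr => j _.
transitivity (\sum_l \sum_i \sum_k
   (w (idx i j) 0)^* * psi (idx i l) 0 * ((w (idx k l) 0)^* * psi (idx k j) 0)^*).
  transitivity (\sum_i \sum_l \sum_k
   (w (idx i j) 0)^* * psi (idx i l) 0 * ((w (idx k l) 0)^* * psi (idx k j) 0)^*).
    by apply: eq_bigr => i _; rewrite exchange_big.
  by rewrite exchange_big.
apply: eq_bigr => l _; rewrite rmorph_sum mulr_suml; apply: eq_bigr => i _.
by rewrite mulr_sumr.
Qed.


Lemma symsq (M : 'I_d -> 'I_d -> C) :
  \sum_j \sum_l M j l * (M l j)^* =
  2%:R^-1 * \sum_j \sum_l nsq (M j l + M l j) - \sum_j \sum_l nsq (M j l).
Proof.
set X := \sum_j \sum_l M j l * (M l j)^*.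
set N := \sum_j \sum_l nsq (M j l).
have E : \sum_j \sum_l nsq (M j l + M l j) =
   \sum_j \sum_l (nsq (M j l) + M j l * (M l j)^*) +
   \sum_j \sum_l (nsq (M l j) + M l j * (M j l)^*).
  rewrite -big_split; apply: eq_bigr => j _; rewrite -big_split.
  by apply: eq_bigr => l _; rewrite /= rmorphD /=; ring.
have E2 : \sum_j \sum_l (nsq (M l j) + M l j * (M j l)^*) =
          \sum_j \sum_l (nsq (M j l) + M j l * (M l j)^*).
  by rewrite exchange_big.
have E3 : \sum_j \sum_l (nsq (M j l) + M j l * (M l j)^*) = N + X.
  rewrite /N /X -big_split; apply: eq_bigr => j _; by rewrite -big_split.
by rewrite E E2 E3; field.
Qed.

Lemma ppt_main (psi : 'cV[C]_(d * d))
  (anti : forall i j, psi (idx j i) 0 = - psi (idx i j) 0)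
  (norm : \sum_i \sum_j nsq (psi (idx i j) 0) = 1)
  (p k : C) (p0 : 0 <= p) (pk : p <= k) :
  psd (ptrans (p *: proj psi + k *: PS C d)).
Proof.
move=> w; rewrite ptransDZ formDZ form_ptrans_proj form_ptrans_PS symsq.
set M := fun j l => \sum_i (w (idx i j) 0)^* * psi (idx i l) 0.
set G := \sum_j \sum_l nsq (M j l + M l j).
set NM := \sum_j \sum_l nsq (M j l).
set t := \sum_k w (idx k k) 0.
have HM : 2%:R * NM <= Nw w.
  rewrite /NM mulr_sumr /Nw exchange_big /=; apply: ler_sum => j _.
  have := @KL C d (fun i l => psi (idx i l) 0) anti (fun i => (w (idx i j) 0)^*).
  rewrite norm mul1r => H; apply: le_trans H _.
  have E : \sum_i nsq ((w (idx i j) 0)^*) = \sum_i nsq (w (idx i j) 0).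
    by apply: eq_bigr => i _; rewrite nsq_conj.
  by rewrite E lexx.
have Nw0 : 0 <= Nw w.
  by apply: sumr_ge0 => i _; apply: sumr_ge0 => j _; apply: nsq_ge0.
have HM2 : NM <= 2%:R^-1 * Nw w.
  have h2 : (0 : C) < 2%:R by rewrite ltr0n.
  by rewrite -(ler_pM2l h2) mulrA mulfV ?mul1r // gt_eqF.
have -> : p * (2%:R^-1 * G - NM) + k * (2%:R^-1 * Nw w + 2%:R^-1 * nsq t) =
   p * (2%:R^-1 * G) + (k * (2%:R^-1 * Nw w) - p * NM) + k * (2%:R^-1 * nsq t).
  by ring.
have k0 : 0 <= k by apply: le_trans pk.
have i20 : (0 : C) <= 2%:R^-1 by rewrite invr_ge0 ler0n.
apply: addr_ge0; first apply: addr_ge0.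
- apply: mulr_ge0 => //; apply: mulr_ge0 => //.
  by apply: sumr_ge0 => j _; apply: sumr_ge0 => l _; apply: nsq_ge0.
- rewrite subr_ge0; apply: le_trans (ler_wpM2l p0 HM2) _.
  by apply: ler_wpM2r => //; apply: mulr_ge0.
- by apply: mulr_ge0 => //; apply: mulr_ge0 => //; apply: nsq_ge0.
Qed.

End PPTpart.

Section Decomp.
Variable C : numClosedFieldType.
Local Notation nsq z := (z * z^*).

Lemma form_delta n (A : 'M[C]_n) (i j : 'I_n) (t : C) :
  let v := \col_a ((i == a)%:R + t * (j == a)%:R) in
  (adjmx v *m A *m v) 0 0 = A i i + t * A i j + t^* * A j i + t^* * t * A j j.
Proof.
move=> v; rewrite formE.
transitivity (\sum_a ((i == a)%:R * (A a i + t * A a j)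
                     + (j == a)%:R * (t^* * (A a i + t * A a j)))).
  apply: eq_bigr => a _.
  transitivity (\sum_b ((i == b)%:R * ((v a 0)^* * A a b) +
                        (j == b)%:R * ((v a 0)^* * A a b * t))).
    by apply: eq_bigr => b _; rewrite [v b 0]mxE; ring.
  rewrite big_split /= sumD sumD [v a 0]mxE rmorphD rmorphM /= !rmorph_nat.
  ring.
rewrite big_split /= sumD sumD; ring.
Qed.

Lemma psd_herm n (A : 'M[C]_n) : psd A -> forall i j, A j i = (A i j)^*.
Proof.
move=> H i j.
have R t : (A i i + t * A i j + t^* * A j i + t^* * t * A j j)^* =
             A i i + t * A i j + t^* * A j i + t^* * t * A j j.
  by apply: geC0_conj; rewrite -form_delta; apply: H.
have Rii : (A i i)^* = A i i.
  by have := R 0; rewrite rmorph0 !mul0r !addr0.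
have Rjj : (A j j)^* = A j j.
  have := R 0; rewrite rmorph0 !mul0r !addr0 => _.
  have := H (\col_a ((j == a)%:R + 0 * (j == a)%:R)).
  by rewrite form_delta rmorph0 !mul0r !addr0 => /geC0_conj.
have E1 : (A i j)^* + (A j i)^* = A i j + A j i.
  have := R 1; rewrite rmorph1 !mul1r !rmorphD /= Rii Rjj => E.
  have : (A i i + A j j) + ((A i j)^* + (A j i)^*) =
         (A i i + A j j) + (A i j + A j i).
    transitivity (A i i + (A i j)^* + (A j i)^* + A j j); first by ring.
    by rewrite E; ring.
  by move/addrI.
have E2 : (A i j)^* - (A j i)^* = A j i - A i j.
  have := R 'i; rewrite !rmorphD !rmorphM /= conjCK conjCi Rii Rjj => E.
  have Ei : 'i * 'i = -1 :> C by rewrite -expr2 sqrCi.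
  have : 'i * ((A i j)^* - (A j i)^*) = 'i * (A j i - A i j).
    have E' : (A i i + A j j) + (- 'i * (A i j)^* + 'i * (A j i)^*) =
              (A i i + A j j) + ('i * A i j - 'i * A j i).
      have Ei2 : 'i * - 'i = 1 :> C by rewrite mulrN Ei opprK.
      have Ei3 : - 'i * 'i = 1 :> C by rewrite mulNr Ei opprK.
      rewrite Ei2 Ei3 !mul1r in E.
      transitivity (A i i + - 'i * (A i j)^* + 'i * (A j i)^* + A j j).
        by ring.
      by rewrite E; ring.
    move/addrI: E' => E'.
    transitivity (- (- 'i * (A i j)^* + 'i * (A j i)^*)); first by ring.
    by rewrite E'; ring.
  by move/(mulfI (neq0Ci C)).
have : 2%:R * (A j i) = 2%:R * (A i j)^*.
  transitivity ((A i j + A j i) + (A j i - A i j)); first by ring.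
  rewrite -E1 -E2; ring.
by move/(mulfI (two_neq0 C)).
Qed.


Lemma psd_decomp n (A : 'M[C]_n) : psd A ->
  exists a : 'I_n -> 'cV[C]_n, A = \sum_m a m *m adjmx (a m).
Proof.
move=> H.
have Anorm : A \is normalmx.
  apply/normalmxP.
  have -> : (A ^t*)%sesqui = A.
    by apply/matrixP => i j; rewrite !mxE -psd_herm.
  by [].
have /orthomx_spectralP AE := Anorm.
set P := spectralmx A in AE; set D := spectral_diag A in AE.
have PU : P \is unitarymx by apply: spectral_unitarymx.
rewrite invmx_unitary // in AE.
have AE' i j : A i j = \sum_m (P m i)^* * D 0 m * P m j.
  rewrite AE mxE; apply: eq_bigr => m _.
  by rewrite mul_mx_diag !mxE.
have U m m' : \sum_k P m k * (P m' k)^* = (m == m')%:R.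
  move/unitarymxP: PU => /matrixP /(_ m m'); rewrite !mxE => <-.
  by apply: eq_bigr => k _; rewrite !mxE.
have D0 m : 0 <= D 0 m.
  have := H (\col_i (P m i)^*); rewrite formE.
  suff -> : \sum_a \sum_b ((\col_i (P m i)^*) a 0)^* * A a b *
             (\col_i (P m i)^*) b 0 = D 0 m by [].
  transitivity (\sum_a \sum_b \sum_m' P m a * (P m' a)^* * D 0 m' * (P m' b * (P m b)^*)).
    apply: eq_bigr => a _; apply: eq_bigr => b _.
    rewrite !mxE conjCK AE' mulr_sumr mulr_suml; apply: eq_bigr => m' _; ring.
  transitivity (\sum_m' D 0 m' * ((\sum_a P m a * (P m' a)^*) * (\sum_b P m' b * (P m b)^*))).
    transitivity (\sum_a \sum_m' \sum_b P m a * (P m' a)^* * D 0 m' * (P m' b * (P m b)^*)).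
      by apply: eq_bigr => a _; rewrite exchange_big.
    rewrite exchange_big; apply: eq_bigr => m' _.
    rewrite mulr_suml mulr_sumr; apply: eq_bigr => a _.
    rewrite mulr_sumr mulr_sumr; apply: eq_bigr => b _; ring.
  transitivity (\sum_m' (m == m')%:R * ((m' == m)%:R * D 0 m')).
    by apply: eq_bigr => m' _; rewrite !U; ring.
  transitivity (\sum_m' (m == m')%:R * D 0 m').
    by apply: eq_bigr => m' _; rewrite [m' == m]eq_sym; case: (m == m'); rewrite ?mul1r ?mul0r.
  exact: (@sumD C n m (fun m' => D 0 m')).
exists (fun m => \col_i (sqrtC (D 0 m) * (P m i)^*)).
apply/matrixP => i j; rewrite summxE AE'; apply: eq_bigr => m _.
rewrite !mxE big_ord1 !mxE rmorphM /= conjCK.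
have sq : (sqrtC (D 0 m))^* = sqrtC (D 0 m) by apply: geC0_conj; rewrite sqrtC_ge0.
rewrite sq.
by rewrite -{1}(sqrtCK (D 0 m)) expr2; ring.
Qed.

End Decomp.

Section Sep.
Variable C : numClosedFieldType.
Variable d : nat.
Local Notation idx i j := (@mxtens_index d d (i, j)).
Local Notation nsq z := (z * z^*).

Definition ip (x y : 'cV[C]_d) (u : 'cV[C]_(d * d)) :=
  \sum_k \sum_l (x k 0)^* * (y l 0)^* * u (idx k l) 0.

Lemma form_sum n I (r : seq I) (u : 'cV[C]_n) (M : I -> 'M[C]_n) :
  (adjmx u *m (\sum_(k <- r) M k) *m u) 0 0 = \sum_(k <- r) (adjmx u *m M k *m u) 0 0.
Proof. by rewrite mulmx_sumr mulmx_suml summxE. Qed.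

Lemma form_scale n (u : 'cV[C]_n) (M : 'M[C]_n) a :
  (adjmx u *m (a *: M) *m u) 0 0 = a * (adjmx u *m M *m u) 0 0.
Proof. by rewrite -scalemxAr -scalemxAl mxE. Qed.

Lemma tens_sum I J (r : seq I) (s : seq J) (X : I -> 'M[C]_d) (Y : J -> 'M[C]_d) :
  (\sum_(m <- r) X m) *t (\sum_(n <- s) Y n) = \sum_(m <- r) \sum_(n <- s) X m *t Y n.
Proof.
apply/matrixP => a b; rewrite !mxE !summxE mulr_suml; apply: eq_bigr => m _.
by rewrite summxE mulr_sumr; apply: eq_bigr => n _; rewrite mxE.
Qed.

Lemma form_prod (x y : 'cV[C]_d) (u : 'cV[C]_(d * d)) :
  (adjmx u *m ((x *m adjmx x) *t (y *m adjmx y)) *m u) 0 0 = nsq (ip x y u).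
Proof.
rewrite formE sum2.
transitivity (\sum_i \sum_j \sum_k \sum_l
   ((u (idx i j) 0)^* * x i 0 * y j 0) * ((x k 0)^* * (y l 0)^* * u (idx k l) 0)).
  apply: eq_bigr => i _; apply: eq_bigr => j _; rewrite sum2.
  apply: eq_bigr => k _; apply: eq_bigr => l _.
  rewrite tensmxE !mxE !big_ord1 !mxE; ring.
transitivity ((\sum_i \sum_j (u (idx i j) 0)^* * x i 0 * y j 0) * ip x y u).
  rewrite /ip mulr_suml; apply: eq_bigr => i _.
  rewrite mulr_suml; apply: eq_bigr => j _.
  rewrite mulr_sumr; apply: eq_bigr => k _.
  by rewrite mulr_sumr.
rewrite mulrC; congr (_ * _); rewrite /ip rmorph_sum; apply: eq_bigr => i _.
rewrite rmorph_sum; apply: eq_bigr => j _.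
by rewrite !rmorphM /= !conjCK; ring.
Qed.


Lemma form_tens_psd (A B : 'M[C]_d) : psd A -> psd B ->
  exists a b : 'I_d -> 'cV[C]_d, forall u,
    (adjmx u *m (A *t B) *m u) 0 0 = \sum_m \sum_n nsq (ip (a m) (b n) u).
Proof.
move=> /psd_decomp [a ->] /psd_decomp [b ->]; exists a, b => u.
rewrite tens_sum form_sum; apply: eq_bigr => m _.
rewrite form_sum; apply: eq_bigr => n _; exact: form_prod.
Qed.

Lemma inner_sum2 (v u : 'cV[C]_(d * d)) :
  (adjmx v *m u) 0 0 = \sum_k \sum_l (v (idx k l) 0)^* * u (idx k l) 0.
Proof. by rewrite mxE sum2; apply: eq_bigr => k _; apply: eq_bigr => l _; rewrite !mxE. Qed.

Lemma rank_contra (psi : 'cV[C]_(d * d))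
  (anti : forall i j, psi (idx j i) 0 = - psi (idx i j) 0)
  (unit : (adjmx psi *m psi) 0 0 = 1) (x y : 'cV[C]_d) :
  ip x y psi != 0 ->
  (forall u : 'cV[C]_(d * d), (forall i j, u (idx j i) 0 = - u (idx i j) 0) ->
      (adjmx psi *m u) 0 0 = 0 -> ip x y u = 0) ->
  (schmidt_rank psi <= 2)%N.
Proof.
move=> ip0 Hu.
pose zf k l := x k 0 * y l 0 - x l 0 * y k 0.
pose zv : 'cV[C]_(d * d) :=
  \col_a zf (@mxtens_unindex d d a).1 (@mxtens_unindex d d a).2.
have zvE k l : zv (idx k l) 0 = zf k l by rewrite mxE idxK.
have zu (u : 'cV[C]_(d * d)) : (forall i j, u (idx j i) 0 = - u (idx i j) 0) ->
    (adjmx zv *m u) 0 0 = 2%:R * ip x y u.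
  move=> ua; rewrite inner_sum2.
  transitivity (ip x y u - \sum_k \sum_l (x l 0)^* * (y k 0)^* * u (idx k l) 0).
    rewrite /ip -sumrB; apply: eq_bigr => k _; rewrite -sumrB.
    by apply: eq_bigr => l _; rewrite zvE /zf rmorphB !rmorphM /=; ring.
  have -> : \sum_k \sum_l (x l 0)^* * (y k 0)^* * u (idx k l) 0 = - ip x y u.
    rewrite exchange_big /ip -sumrN; apply: eq_bigr => l _; rewrite -sumrN.
    by apply: eq_bigr => k _; rewrite (ua l k); ring.
  ring.
set lam := (adjmx psi *m zv) 0 0.
pose u := zv - lam *: psi.
have uE k l : u (idx k l) 0 = zf k l - lam * psi (idx k l) 0.
  by rewrite !mxE idxK.
have ua : forall i j, u (idx j i) 0 = - u (idx i j) 0.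
  by move=> i j; rewrite !uE anti /zf; ring.
have pu : (adjmx psi *m u) 0 0 = 0.
  by rewrite mulmxBr -scalemxAr mxE [X in _ + X]mxE [X in - X]mxE unit -/lam mulr1 subrr.
have ipu := Hu u ua pu.
have zu0 := zu u ua; rewrite ipu mulr0 in zu0.
have uu : (adjmx u *m u) 0 0 = 0.
  have -> : (adjmx u *m u) 0 0 = (adjmx zv *m u) 0 0 - lam^* * (adjmx psi *m u) 0 0.
    rewrite !mxE mulr_sumr -sumrB; apply: eq_bigr => a _; rewrite !mxE.
    by rewrite rmorphB rmorphM /=; ring.
  by rewrite zu0 pu mulr0 subrr.
have u0 k l : u (idx k l) 0 = 0.
  move: uu; rewrite inner_sum2 => uu.
  have h1 : forall i, \sum_j (u (idx i j) 0)^* * u (idx i j) 0 = 0.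
    move=> i; apply: (psumr_eq0P _ uu) => // i' _.
    by apply: sumr_ge0 => j _; rewrite mulrC; exact: nsq_ge0.
  have h : (u (idx k l) 0)^* * u (idx k l) 0 = 0.
    by apply: (psumr_eq0P _ (h1 k)) => // j _; rewrite mulrC; exact: nsq_ge0.
  by apply/eqP; rewrite -mul_conjC_eq0 mulrC h.
have zl k l : zf k l = lam * psi (idx k l) 0.
  by move: (u0 k l); rewrite uE => /eqP; rewrite subr_eq0 => /eqP.
have lam0 : lam != 0.
  apply/negP => /eqP l0; move: ip0; apply/negP; rewrite negbK.
  have := zu psi anti; rewrite inner_sum2 big1 => [|k _].
    by move/esym/eqP; rewrite mulf_eq0 (negbTE (two_neq0 C)).
  by rewrite big1 // => l _; rewrite zvE zl l0 mul0r rmorph0 mul0r.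
have SE : \matrix_(i, j) psi (idx i j) 0 = lam^-1 *: (x *m y^T - y *m x^T).
  apply/matrixP => k l; rewrite !mxE !big_ord1 !mxE.
  by rewrite -(mulKf lam0 (psi (idx k l) 0)) -zl /zf; ring.
rewrite /schmidt_rank SE.
apply: leq_trans (mxrank_scale _ _) _.
apply: leq_trans (mxrank_add _ _) _.
rewrite mxrank_opp.
by rewrite -[2%N]/(1 + 1)%N; apply: leq_add; apply: leq_trans (mxrankM_maxl _ _) _; exact: rank_leq_col.
Qed.

End Sep.

Section Final.
Variable C : numClosedFieldType.
Variable d : nat.
Local Notation idx i j := (@mxtens_index d d (i, j)).
Local Notation nsq z := (z * z^*).

Lemma sum_neq0 (I : finType) (F : I -> C) : \sum_i F i != 0 -> exists i, F i != 0.
Proof.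
move=> H; case: (pickP (fun i => F i != 0)) => [i Hi|H0]; first by exists i.
move: H; rewrite big1 ?eqxx // => i _; apply/eqP.
by have := H0 i; rewrite /= => /negbFE.
Qed.

Lemma not_sep (psi : 'cV[C]_(d * d))
  (anti : forall i j, psi (idx j i) 0 = - psi (idx i j) 0)
  (unit : (adjmx psi *m psi) 0 0 = 1)
  (rk : (2 < schmidt_rank psi)%N) (p k : C) (p0 : p != 0) :
  ~ separable (p *: proj psi + k *: PS C d).
Proof.
case=> N [pk [A [B [pk0 [_ [st E]]]]]].
have FE (u : 'cV[C]_(d * d)) : (adjmx u *m (p *: proj psi + k *: PS C d) *m u) 0 0 =
    \sum_i pk i * (adjmx u *m (A i *t B i) *m u) 0 0.
  by rewrite E form_sum; apply: eq_bigr => i _; rewrite form_scale.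
have Fs (u : 'cV[C]_(d * d)) : (adjmx u *m (p *: proj psi + k *: PS C d) *m u) 0 0 =
    p * ((adjmx u *m psi) 0 0 * (adjmx psi *m u) 0 0) +
    k * (adjmx u *m PS C d *m u) 0 0 by rewrite formDZ form_proj.
have G0 i (u : 'cV[C]_(d * d)) : 0 <= (adjmx u *m (A i *t B i) *m u) 0 0.
  have [a [b ->]] := form_tens_psd (proj1 (proj1 (st i))) (proj1 (proj2 (st i))).
  by apply: sumr_ge0 => m _; apply: sumr_ge0 => n _; apply: nsq_ge0.
have Fpsi : \sum_i pk i * (adjmx psi *m (A i *t B i) *m psi) 0 0 = p.
  by rewrite -FE Fs unit mulr1 mulr1 form_PS_anti // mulr0 addr0.
have [i Hi] : exists i, pk i * (adjmx psi *m (A i *t B i) *m psi) 0 0 != 0.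
  by apply: sum_neq0; rewrite Fpsi.
have pki : pk i != 0 by apply: contraNneq Hi => ->; rewrite mul0r.
have [a [b Gab]] :=
  form_tens_psd (proj1 (proj1 (st i))) (proj1 (proj2 (st i))).
have : (adjmx psi *m (A i *t B i) *m psi) 0 0 != 0.
  by apply: contraNneq Hi => ->; rewrite mulr0.
rewrite Gab => /sum_neq0 [m /sum_neq0 [n Hmn]].
have Hip : ip (a m) (b n) psi != 0 by apply: contraNneq Hmn => ->; rewrite mul0r.
have := rank_contra anti unit Hip.
suff Hu : (forall u : 'cV[C]_(d * d), (forall i j, u (idx j i) 0 = - u (idx i j) 0) ->
      (adjmx psi *m u) 0 0 = 0 -> ip (a m) (b n) u = 0).
  by move=> /(_ Hu); rewrite leqNgt rk.
move=> u ua pu.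
have Fu : \sum_i pk i * (adjmx u *m (A i *t B i) *m u) 0 0 = 0.
  by rewrite -FE Fs pu !mulr0 form_PS_anti // mulr0 addr0.
have : pk i * (adjmx u *m (A i *t B i) *m u) 0 0 = 0.
  by apply: (psumr_eq0P _ Fu) => // j _; apply: mulr_ge0 (pk0 j) (G0 j u).
move/eqP; rewrite mulf_eq0 (negbTE pki) /= Gab => /eqP Gu.
have Gm : \sum_n0 nsq (ip (a m) (b n0) u) = 0.
  apply: (psumr_eq0P _ Gu) => // m' _.
  by apply: sumr_ge0 => n' _; apply: nsq_ge0.
have : nsq (ip (a m) (b n) u) = 0.
  by apply: (psumr_eq0P _ Gm) => // n' _; apply: nsq_ge0.
by move/eqP; rewrite mul_conjC_eq0 => /eqP.
Qed.

End Final.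

Local Notation nsq z := (z * z^*).

Unset Implicit Arguments.

Theorem mainTheorem4 (C : numClosedFieldType) (d : nat)
    (psi : 'cV[C]_(d * d))
    (psi_unit : (adjmx psi *m psi) 0 0 = 1)
    (psi_anti : PA C d *m psi = psi)
    (psi_rank : (2 < schmidt_rank psi)%N)
    (p : C) (p_pos : 0 < p) (p_le : p <= (dS C d + 1)^-1) :
  PPT_entangled (p *: proj psi + (1 - p) / dS C d *: PS C d).
Proof.
have anti := anti_of_PA psi_anti.
have d0 : (0 < d)%N.
  move: psi_rank; rewrite /schmidt_rank => h.
  by have := leq_trans h (rank_leq_row _); case: d {anti psi psi_unit psi_anti h p_le} .
have dS0 : 0 < dS C d.
  by rewrite /dS mulr_gt0 ?invr_gt0 ?ltr0n // muln_gt0 d0.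
have dS1 : 0 < dS C d + 1 by rewrite addr_gt0.
have h1 : p * (dS C d + 1) <= 1.
  by rewrite -ler_pdivlMr // div1r.
have pk : p <= (1 - p) / dS C d.
  rewrite ler_pdivlMr // lerBrDr.
  by have -> : p * dS C d + p = p * (dS C d + 1) by ring.
have k0 : 0 <= (1 - p) / dS C d by apply: le_trans pk; apply: ltW.
have norm : \sum_i \sum_j nsq (psi (@mxtens_index d d (i, j)) 0) = 1.
  rewrite -psi_unit inner_sum2; apply: eq_bigr => i _; apply: eq_bigr => j _.
  by rewrite mulrC.
split; last by have := ppt_main anti norm (ltW p_pos) pk.
split; last by have := not_sep anti psi_unit psi_rank (lt0r_neq0 p_pos).
split.
  move=> v; rewrite formDZ form_proj adj_conj.
  apply: addr_ge0; apply: mulr_ge0 => //; first exact: ltW.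
    by rewrite mulrC; apply: nsq_ge0.
  exact: form_PS_ge0.
rewrite mxtraceD (mxtraceZ p) (mxtraceZ ((1 - p) / dS C d)) tr_proj psi_unit tr_PS mulr1 divfK ?lt0r_neq0 //.
by rewrite addrC subrK.
Qed.
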